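(* Let $X$ be a locally compact Hausdorff space. Then $(\Gamma(X),\tau_{hco})$ is a regular space.
   Context: $\Gamma(X)$ denotes the set of all homeomorphisms $f:\mathrm{dom}(f)\to\mathrm{im}(f)$ between open subsets of $X$ (including the empty function), an inverse semigroup under partial composition. For compact $K\subseteq X$ and open $V\subseteq X$ put $\langle K,V\rangle=\{f\in\Gamma(X): K\subseteq\mathrm{dom}(f),\ f(K)\subseteq V\}$ and $\langle K,V\rangle^{-1}=\{f\in\Gamma(X): K\subseteq\mathrm{im}(f),\ f^{-1}(K)\subseteq V\}$. $CL(X)$ is the set of closed subsets of $X$ (including $\emptyset$) with the Fell topology, generated by the subbasic sets $(X\setminus K)^+=\{A\in CL(X): A\subseteq X\setminus K\}$ ($K$ compact) and $V^-=\{A\in CL(X): A\cap V\neq\emptyset\}$ ($V$ nonempty open). Define $D,I:\Gamma(X)\to CL(X)$ by $D(f)=X\setminus\mathrm{dom}(f)$, $I(f)=X\setminus\mathrm{im}(f)$. The topology $\tau_{hco}$ on $\Gamma(X)$ is generated by all sets $\langle K,V\rangle$, $\langle K,V\rangle^{-1}$, $D^{-1}(W)$ and $I^{-1}(W)$, where $K$ is compact, $V$ open in $X$ and $W$ is Fell-open in $CL(X)$. *)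

(* Defs.v *)
From HB Require Import structures.
From mathcomp Require Import all_boot all_classical all_reals all_analysis.

Set Implicit Arguments.
Unset Strict Implicit.
Unset Printing Implicit Defensive.

Local Open Scope classical_set_scope.

Section PartialHomeo.
Variable X : topologicalType.

(* A partial map X -> X is represented canonically as X -> option X
   (None = undefined), so that equal partial functions are equal. *)
Definition pdom (f : X -> option X) : set X := [set x | exists y, f x = Some y].
Definition pim (f : X -> option X) : set X := [set y | exists x, f x = Some y].

Definition is_partial_homeo (f : X -> option X) : Prop :=
  [/\ open (pdom f), open (pim f),
      (forall x1 x2 y, f x1 = Some y -> f x2 = Some y -> x1 = x2),
      {within pdom f, continuous (fun x => odflt x (f x))} &
      exists g : X -> X, (forall x y, f x = Some y -> g y = x) /\
                         {within pim f, continuous g}].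

Definition Gamma : Type := {f : X -> option X | is_partial_homeo f}.
HB.instance Definition _ := gen_eqMixin Gamma.
HB.instance Definition _ := gen_choiceMixin Gamma.

Definition gdom (f : Gamma) : set X := pdom (proj1_sig f).
Definition gim (f : Gamma) : set X := pim (proj1_sig f).

Definition CL : Type := {A : set X | closed A}.
HB.instance Definition _ := gen_eqMixin CL.
HB.instance Definition _ := gen_choiceMixin CL.

Definition fell_subbase : set (set CL) :=
  [set S | (exists K : set X, compact K /\
              S = [set A : CL | proj1_sig A `<=` ~` K])
        \/ (exists V : set X, [/\ open V, V !=set0 &
              S = [set A : CL | proj1_sig A `&` V !=set0]])].

HB.instance Definition _ :=
  isSubBaseTopological.Build CL fell_subbase id.

Lemma closed_compl_gdom (f : Gamma) : closed (~` gdom f).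
Proof. by apply: open_closedC; have [h1 h2 _ _ _] := proj2_sig f. Qed.

Lemma closed_compl_gim (f : Gamma) : closed (~` gim f).
Proof. by apply: open_closedC; have [h1 h2 _ _ _] := proj2_sig f. Qed.

Definition Dmap (f : Gamma) : CL := exist _ (~` gdom f) (@closed_compl_gdom f).
Definition Imap (f : Gamma) : CL := exist _ (~` gim f) (@closed_compl_gim f).

Definition hco_fwd (K V : set X) : set Gamma :=
  [set f | K `<=` gdom f /\
           forall x y, K x -> proj1_sig f x = Some y -> V y].
Definition hco_inv (K V : set X) : set Gamma :=
  [set f | K `<=` gim f /\
           forall x y, K y -> proj1_sig f x = Some y -> V x].

Definition hco_subbase : set (set Gamma) :=
  [set S | (exists K V, [/\ compact K, open V & S = hco_fwd K V])
        \/ (exists K V, [/\ compact K, open V & S = hco_inv K V])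
        \/ (exists W : set CL, open W /\ S = Dmap @^-1` W)
        \/ (exists W : set CL, open W /\ S = Imap @^-1` W)].

HB.instance Definition _ :=
  isSubBaseTopological.Build Gamma hco_subbase id.

End PartialHomeo.

(* Main.v *)
Require Import Defs.
From HB Require Import structures.
From mathcomp Require Import all_boot all_classical all_reals all_analysis.
From mathcomp Require Import finmap.
Set Implicit Arguments. Unset Strict Implicit.
Local Open Scope classical_set_scope.
Definition pX (X : topologicalType) (x0 : X) : Type := X.
HB.instance Definition _ (X : topologicalType) (x0 : X) := Topological.copy (@pX X x0) (Topological.sort X).
HB.instance Definition _ (X : topologicalType) (x0 : X) := isPointed.Build (@pX X x0) x0.
Lemma cc (X : topologicalType) (x0 : X) (A : set X) : compact A -> @cover_compact X A.
Proof. move=> cA. have := @compact_cover (@pX X x0). move=> e. have : @compact (@pX X x0) A by []. rewrite e. exact. Qed.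

Lemma lc_shrink (X : topologicalType) : hausdorff_space X -> locally_compact [set: X] ->
  forall K U : set X, compact K -> open U -> K `<=` U ->
  exists V C : set X, [/\ open V, compact C, K `<=` V, V `<=` C & C `<=` U].
Proof.
move=> hX lX K U cK oU KU.
case: (pselect (K !=set0)) => [[x0 Kx0]|nK]; last first.
  exists set0, set0; split => //; [exact: open0|exact: compact0|].
  by move=> x Kx; apply: nK; exists x.
have H : forall x, exists B : set X, U x -> nbhs x B /\ compact (closure B) /\ closure B `<=` U.
  move=> x; case: (pselect (U x)) => Ux; last by exists set0.
  have [//|N Nx [cN clN]] := lX x; rewrite withinET in Nx.
  have [|B Bx clB] := @compact_regular X x N hX cN Nx (U `&` N) _.
    by apply: filterI => //; apply: open_nbhs_nbhs.
  exists B => _; split => //; split; last by move=> y /clB [].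
  apply: (subclosed_compact _ cN) => //; first exact: closed_closure.
  by move=> y /clB [].
have [B HB] := choice H.
have [D' sD' cov] := @cc X x0 K cK X K (fun x => interior (B x)) (fun x _ => @open_interior _ _) 
  (fun x Kx => ex_intro2 _ _ x Kx (proj1 (HB x (KU x Kx)))).
exists (cover [set` D'] (fun x : X => interior (B x))), (cover [set` D'] (fun x : X => closure (B x))).
split => //.
- by apply: bigcup_open => i _; exact: open_interior.
- rewrite /cover bigcup_fset big_seq; apply: bigsetU_compact => i iD.
  have Ki : K i by have := sD' i iD; rewrite in_setE.
  by have [_ []] := HB i (KU i Ki).
- move=> y [i Di /interior_subset ?]; exists i => //; exact: subset_closure.
- move=> y [i Di]; have Ki : K i by have := sD' i Di; rewrite in_setE.
  by have [_ [_]] := HB i (KU i Ki); apply.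
Qed.
Lemma reg_sub (T : topologicalType) (S : set (set T)) :
  (forall x A, nbhs x A -> exists B, [/\ finI_from S id B, B x & B `<=` A]) ->
  (forall s x, S s -> s x -> exists2 W, nbhs x W & closure W `<=` s) ->
  regular_space T.
Proof.
move=> hn hs x A /hn [B [[D' sD' <-] Bx BA]].
have FF : Filter (filter_from (nbhs x) closure).
  apply: filter_from_filter; first by exists setT; apply: filterT.
  by move=> P Q Px Qx; exists (P `&` Q); [apply: filterI|exact: closureI].
apply: (filterS BA); apply: filter_bigI => i iD.
have := sD' i iD; rewrite in_setE => Si. exact: (hs _ _ Si (Bx i iD)).
Qed.
Section Main.
Variable X : topologicalType.
Hypothesis hX : hausdorff_space X.
Hypothesis lX : locally_compact [set: X].

Lemma sub_openC (s : set (CL X)) : fell_subbase s -> open s.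
Proof.
move=> hs. rewrite openE => x sx.
exists s; split => //.
exists [set s]; first by move=> _ ->; exact: finI_from1.
by rewrite bigcup_set1.
Qed.
Lemma nbC (x : CL X) A : nbhs x A -> exists B, [/\ finI_from (@fell_subbase X) id B, B x & B `<=` A].
Proof.
move=> [B [[D0 sD0 <-] [i Di ix] BA]].
exists i; split => //; [exact: sD0| move=> y iy; apply: BA; by exists i].
Qed.
Lemma sub_openG (s : set (Gamma X)) : hco_subbase s -> open s.
Proof.
move=> hs. rewrite openE => x sx.
exists s; split => //.
exists [set s]; first by move=> _ ->; exact: finI_from1.
by rewrite bigcup_set1.
Qed.
Lemma nbG (x : Gamma X) A : nbhs x A -> exists B, [/\ finI_from (@hco_subbase X) id B, B x & B `<=` A].
Proof.
move=> [B [[D0 sD0 <-] [i Di ix] BA]].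
exists i; split => //; [exact: sD0| move=> y iy; apply: BA; by exists i].
Qed.

Definition fup (K : set X) := [set A : CL X | proj1_sig A `<=` ~` K].
Definition fhit (V : set X) := [set A : CL X | proj1_sig A `&` V !=set0].

Lemma open_fup K : compact K -> open (fup K).
Proof. by move=> cK; apply: sub_openC; left; exists K. Qed.
Lemma open_fhit V : open V -> V !=set0 -> open (fhit V).
Proof. by move=> oV nV; apply: sub_openC; right; exists V. Qed.

Lemma CL_sub_reg (s : set (CL X)) A : fell_subbase s -> s A ->
  exists2 W, nbhs A W & closure W `<=` s.
Proof.
case=> [[K [cK ->]]|[V [oV nV ->]]] /= hA.
- have [V [C [oV cC KV VC CA]]] := @lc_shrink X hX lX _ _ cK (closed_openC (proj2_sig A))
     (fun x Kx Ax => hA x Ax Kx).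
  exists (fup C).
    apply: open_nbhs_nbhs; split; first exact: open_fup.
    by move=> x Ax Cx; exact: (CA x Cx Ax).
  move=> B clB x Bx Kx.
  have [B' [WB' [y [B'y Vy]]]] := clB (fhit V) (open_nbhs_nbhs (conj (open_fhit oV (ex_intro _ x (KV x Kx))) (ex_intro _ x (conj Bx (KV x Kx))))).
  exact: (WB' y B'y (VC y Vy)).
- case: hA => x [Ax Vx].
  have [V' [C [oV' cC xV' V'C CV]]] := @lc_shrink X hX lX _ _ (@compact_set1 X x) oV
     (fun y (e : [set x] y) => eq_ind_r V Vx e).
  have nV' : V' !=set0 by exists x; apply: xV'.
  exists (fhit V').
    apply: open_nbhs_nbhs; split; first exact: open_fhit.
    by exists x; split => //; apply: xV'.
  move=> B clB; apply: contrapT => hn.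
  have BC : fup C B.
    by move=> y By Cy; apply: hn; exists y; split => //; apply: CV.
  have [B' [[y [B'y V'y]] CB']] := clB (fup C) (open_nbhs_nbhs (conj (open_fup cC) BC)).
  exact: (CB' y B'y (V'C y V'y)).
Qed.

Lemma CL_regular : regular_space (CL X).
Proof. exact: (reg_sub nbC CL_sub_reg). Qed.

End Main.
Section G.
Variable X : topologicalType.
Hypothesis hX : hausdorff_space X.
Hypothesis lX : locally_compact [set: X].

Definition rel (b : bool) (f : Gamma X) (x y : X) : Prop :=
  if b then proj1_sig f x = Some y else proj1_sig f y = Some x.
Definition rdom (b : bool) (f : Gamma X) : set X := if b then gdom f else gim f.
Definition rmap (b : bool) (f : Gamma X) : CL X := if b then Dmap f else Imap f.
Definition hcoB (b : bool) (K V : set X) : set (Gamma X) :=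
  [set g | K `<=` rdom b g /\ forall x y, K x -> rel b g x y -> V y].

Lemma rdomE b f x : rdom b f x <-> exists y, rel b f x y.
Proof. by case: b. Qed.
Lemma rmapE b f : proj1_sig (rmap b f) = ~` rdom b f.
Proof. by case: b. Qed.
Lemma rel_fun b f x y y' : rel b f x y -> rel b f x y' -> y = y'.
Proof.
have [_ _ inj _ _] := proj2_sig f.
case: b => /=; first by move=> -> [].
by move=> e e'; apply: (inj _ _ _ e e').
Qed.
Lemma open_rdom b f : open (rdom b f).
Proof. by have [? ? _ _ _] := proj2_sig f; case: b. Qed.
Lemma rel_cont b f : exists phi : X -> X,
  {within rdom b f, continuous phi} /\ forall x y, rel b f x y -> phi x = y.
Proof.
have [_ _ _ c [g [gK gc]]] := proj2_sig f.
case: b.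
  by exists (fun x => odflt x (proj1_sig f x)); split => // x y /= ->.
by exists g; split => // x y /= /gK.
Qed.

Lemma hcoB_open b K V : compact K -> open V -> open (hcoB b K V).
Proof.
move=> cK oV; apply: sub_openG; case: b.
  by left; exists K, V; split.
right; left; exists K, V; split => //.
apply/seteqP; split => g [h1 h2]; split => // x y.
  by move=> Ky e; exact: h2 Ky e.
by move=> Kx e; exact: h2 Kx e.
Qed.

Lemma rmap_open b W : open W -> open (rmap b @^-1` W).
Proof.
move=> oW; apply: sub_openG; right; right; case: b.
  by left; exists W.
by right; exists W.
Qed.

Lemma G_sub_reg_hco b K V f : compact K -> open V -> hcoB b K V f ->
  exists2 W, nbhs f W & closure W `<=` hcoB b K V.
Proof.
move=> cK oV [Kd KV].
have [V1 [C1 [oV1 cC1 KV1 V1C1 C1d]]] := lc_shrink hX lX cK (open_rdom b f) Kd.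
have [phi [phic phiE]] := rel_cont b f.
have cphiK : compact (phi @` K).
  apply: continuous_compact => //.
  exact: continuous_subspaceW phic.
have phiKV : phi @` K `<=` V.
  move=> _ [x Kx <-]; have /rdomE [y r] := Kd x Kx.
  by rewrite (phiE _ _ r); exact: KV Kx r.
have [V2 [C2 [oV2 cC2 KV2 V2C2 C2V]]] := lc_shrink hX lX cphiK oV phiKV.
exists (hcoB b C1 setT `&` hcoB b K V2).
  apply: open_nbhs_nbhs; split.
    by apply: openI; apply: hcoB_open => //; exact: openT.
  split; split => //.
  by move=> x y Kx r; apply: KV2; exists x => //; exact: phiE.
move=> g clg; split.
  move=> x Kx; apply: contrapT => nx.
  have nV1 : V1 !=set0 by exists x; exact: KV1.
  have gN : (rmap b @^-1` fhit V1) g.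
    by exists x; split; [rewrite rmapE|exact: KV1].
  have [h [[[C1h _] _] [z []]]] := clg _ (open_nbhs_nbhs (conj (rmap_open b (open_fhit oV1 nV1)) gN)).
  by rewrite rmapE => nz /V1C1 /C1h.
move=> x y Kx r; apply: contrapT => nVy.
have cx : compact [set x] by exact: compact_set1.
have oC2 : open (~` C2) by apply: closed_openC; exact: compact_closed.
have gN : hcoB b [set x] (~` C2) g.
  split; first by move=> _ ->; apply/rdomE; exists y.
  by move=> _ y' -> r'; rewrite -(rel_fun r r') => /C2V.
have [h [[_ [Kh Vh]] [Kh' Vh']]] := clg _ (open_nbhs_nbhs (conj (hcoB_open b cx oC2) gN)).
have /rdomE [y'' r''] := Kh x Kx.
by apply: (Vh' x y'' erefl r''); apply: V2C2; exact: Vh x y'' Kx r''.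
Qed.

End G.
Section H.
Variable X : topologicalType.
Hypothesis hX : hausdorff_space X.
Hypothesis lX : locally_compact [set: X].

Lemma hcoB_false K V : hcoB false K V = @hco_inv X K V.
Proof.
apply/seteqP; split => g [h1 h2]; split => // x y.
  by move=> Ky e; exact: h2 Ky e.
by move=> Kx e; exact: h2 Kx e.
Qed.

Lemma rmap_reg b W (f : Gamma X) : open W -> W (rmap b f) ->
  exists2 N, nbhs f N & closure N `<=` rmap b @^-1` W.
Proof.
move=> oW hW.
have [W' nW' clW'] := @CL_regular X hX lX (rmap b f) W (open_nbhs_nbhs (conj oW hW)).
exists (@rmap X b @^-1` interior W').
  by apply: open_nbhs_nbhs; split; [apply: rmap_open; exact: open_interior|].
move=> g clg; apply: clW' => B nB.
have [h [hW' hB]] := clg _ (open_nbhs_nbhs (conj (rmap_open b (@open_interior _ B)) nB)).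
by exists (rmap b h); split; [exact: interior_subset|exact: interior_subset].
Qed.

Lemma G_sub_reg (s : set (Gamma X)) f : hco_subbase s -> s f ->
  exists2 W, nbhs f W & closure W `<=` s.
Proof.
case=> [[K [V [cK oV ->]]]|[[K [V [cK oV ->]]]|[[W [oW ->]]|[W [oW ->]]]]] hf.
- exact: (@G_sub_reg_hco X hX lX true K V f cK oV hf).
- rewrite -hcoB_false in hf *; exact: (@G_sub_reg_hco X hX lX false K V f cK oV hf).
- by have [N nN cN] := @rmap_reg true W f oW hf; exists N.
- by have [N nN cN] := @rmap_reg false W f oW hf; exists N.
Qed.

Lemma G_regular : regular_space (Gamma X).
Proof. exact: (reg_sub (@nbG X) G_sub_reg). Qed.

Lemma CL_T1 : accessible_space (CL X).
Proof.
move=> A B /eqP nAB.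
have [x hx] : exists x, ~ (proj1_sig A x <-> proj1_sig B x).
  apply: contrapT => hn; apply: nAB.
  case: A B hn => [A cA] [B cB] /= hn.
  have e : A = B.
    apply/funext => x; apply/propext; apply: contrapT => nx; apply: hn; by exists x.
  subst B; congr exist; exact: Prop_irrelevance.
case: (pselect (proj1_sig A x)) => Ax.
  have nBx : ~ proj1_sig B x by move=> Bx; apply: hx.
  exists (fhit (~` proj1_sig B)); rewrite !in_setE; split.
  - apply: open_fhit; first exact: (closed_openC (proj2_sig B)).
    by exists x.
  - by exists x.
  - by move=> [y [By nBy]].
have Bx : proj1_sig B x by apply: contrapT => nBx; apply: hx.
exists (fup [set x]); rewrite !in_setE; split.
- exact: open_fup (@compact_set1 X x).
- by move=> y Ay ey; apply: Ax; rewrite -ey.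
- by move=> h; exact: h x Bx erefl.
Qed.

Lemma G_T1 : accessible_space (Gamma X).
Proof.
move=> f g /eqP nfg.
case: (pselect (Dmap f = Dmap g)) => eD; last first.
  have /eqP := eD => /CL_T1 [W [oW]]; rewrite !in_setE => fW gW.
  exists (@Dmap X @^-1` W); rewrite !in_setE; split => //.
  exact: (rmap_open true oW).
have eD' : gdom f = gdom g.
  have := congr1 (@proj1_sig _ _) eD => /= e.
  by rewrite -[gdom f]setCK -[gdom g]setCK e.
have [x hx] : exists x, proj1_sig f x <> proj1_sig g x.
  apply: contrapT => hn; apply: nfg.
  case: f g eD' hn {eD} => [f pf] [g pg] /= _ hn.
  have e : f = g.
    apply/funext => x; apply: contrapT => nx; apply: hn; by exists x.
  subst g; congr exist; exact: Prop_irrelevance.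
case ef : (proj1_sig f x) hx => [y|] hx; last first.
  case eg : (proj1_sig g x) hx => [y'|] // _.
  have : gdom g x by exists y'.
  by rewrite -eD' => -[z]; rewrite ef.
have : gdom f x by exists y.
rewrite eD' => -[y' eg].
have nyy : y <> y' by move=> e; apply: hx; rewrite eg e.
have oV : open (~` [set y']).
  apply: closed_openC; apply: accessible_closed_set1; exact: hausdorff_accessible.
exists (hco_fwd [set x] (~` [set y'])); rewrite !in_setE; split.
- by apply: sub_openG; left; exists [set x], (~` [set y']); split => //; exact: compact_set1.
- split; first by move=> _ ->; exists y.
  by move=> _ z -> ; rewrite ef => -[<-].
- by move=> [_ h]; exact: h x y' erefl eg erefl.
Qed.

End H.

Theorem mainTheorem2 (X : topologicalType) :
  hausdorff_space X -> locally_compact [set: X] ->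
  accessible_space (Gamma X) /\ regular_space (Gamma X).
Proof.
move=> hX lX; split; [exact: G_T1|exact: G_regular].
Qed.
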